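(* Let $v\ge2$. Then an optimum $(d,3)$-CDA$((d+1)v^3;4,v)$ exists for every positive integer $d$ with $d+1\le v$.
   Context: Consecutive $t$-way interaction in an $N\times k$ array $A=(a_{ij})$ over a $v$-set $V$: $T=\{(i,x_i),\dots,(i+t-1,x_{i+t-1})\}$, $1\le i\le k-t+1$, $x_r\in V$; $\rho(A,T)=\{r: a_{r,j}=x_j\ \forall (j,x_j)\in T\}$, $\rho(A,\mathcal T)=\bigcup_{T\in\mathcal T}\rho(A,T)$. A $(d,t)$-CDA$(N;k,v)$ is an $N\times k$ array over $V$ in which every $t$ consecutive columns contain every $t$-tuple at least once, and such that for every set $\mathcal T$ of exactly $d$ distinct consecutive $t$-way interactions and every consecutive $t$-way interaction $T$: $\rho(A,T)\subseteq\rho(A,\mathcal T)$ iff $T\in\mathcal T$. It is optimum if $N=(d+1)v^t$. *)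

(* Defs.v *)
From mathcomp Require Import all_boot all_order all_algebra.
Set Implicit Arguments. Unset Strict Implicit. Unset Printing Implicit Defensive.

(* An N x k array over the v-set V = 'I_v is a matrix 'M['I_v]_(N,k);
   rows and columns are 0-indexed. *)

(* A consecutive t-way interaction: a start column i (0-indexed, i + t <= k,
   i.e. i : 'I_(k - t + 1) when t <= k) together with the values x_0..x_{t-1}
   placed in columns i, ..., i+t-1. *)
Definition cinter (k t v : nat) : finType :=
  ('I_(k - t + 1) * {ffun 'I_t -> 'I_v})%type.

Definition covers (N k t v : nat) (A : 'M['I_v]_(N, k)) (r : 'I_N)
  (T : cinter k t v) : bool :=
  [forall j : 'I_t, forall c : 'I_k,
     (val c == val T.1 + val j) ==> (A r c == T.2 j)].

Definition rho (N k t v : nat) (A : 'M['I_v]_(N, k)) (T : cinter k t v)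
  : {set 'I_N} := [set r | covers A r T].

Definition rhoS (N k t v : nat) (A : 'M['I_v]_(N, k)) (S : {set cinter k t v})
  : {set 'I_N} := \bigcup_(T in S) rho A T.

Definition is_CDA (d t N k v : nat) (A : 'M['I_v]_(N, k)) : Prop :=
  t <= k /\
  (forall T : cinter k t v, rho A T != set0) /\
  (forall (S : {set cinter k t v}) (T : cinter k t v),
     #|S| = d -> ((rho A T \subset rhoS A S) <-> T \in S)).

Definition is_optimum_CDA (d t N k v : nat) (A : 'M['I_v]_(N, k)) : Prop :=
  is_CDA d t A /\ N = (d + 1) * v ^ t.

(* Main.v *)
Require Import Defs.
From mathcomp Require Import all_boot all_order all_algebra zify.
Set Implicit Arguments. Unset Strict Implicit.

Definition Pt (v d : nat) := ('I_(d+1) * 'I_v * 'I_v * 'I_v)%type.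

Lemma cardP v d : #|{: Pt v d}| = (d+1) * v^3.
Proof. by rewrite !card_prod !card_ord !expnS expn0 muln1 !mulnA. Qed.

Definition gP v d (r : 'I_((d+1)*v^3)) : Pt v d :=
  enum_val (cast_ord (esym (cardP v d)) r).
Definition hP v d (p : Pt v d) : 'I_((d+1)*v^3) :=
  cast_ord (cardP v d) (enum_rank p).
Lemma hPK v d : cancel (@hP v d) (@gP v d).
Proof. by move=> p; rewrite /gP /hP cast_ordK enum_rankK. Qed.
Lemma gP_inj v d : injective (@gP v d).
Proof. by move=> r1 r2 /enum_val_inj /cast_ord_inj. Qed.

Lemma vpos v (a : 'I_v) : 0 < v.
Proof. exact: leq_ltn_trans (leq0n a) (ltn_ord a). Qed.

Definition addm v (a : 'I_v) (s : nat) : 'I_v := Ordinal (ltn_pmod (a + s) (@vpos _ a)).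
Definition subm v (a : 'I_v) (s : nat) : 'I_v := Ordinal (ltn_pmod (a + v - s) (@vpos _ a)).

Definition rowv v d (p : Pt v d) (c : 'I_4) : 'I_v :=
  let: (s, a0, a1, a2) := p in
  match val c with 0 => a0 | 1 => a1 | 2 => a2 | _ => addm a0 s end.

Definition Mat v d : 'M['I_v]_((d+1)*v^3, 4) := \matrix_(r, c) rowv (gP r) c.

Lemma coversE N v (A : 'M['I_v]_(N,4)) r (T : cinter 4 3 v) :
  covers A r T = [forall j : 'I_3, A r (inord (T.1 + j)) == T.2 j].
Proof.
have lt4 : forall j : 'I_3, T.1 + j < 4.
  by move=> j; case: T => [[i Hi] x] /=; move: Hi (ltn_ord j); rewrite /=; lia.
apply/forallP/forallP => H j.
- have := H j; move/forallP/(_ (inord (T.1 + j))).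
  by rewrite /= inordK ?eqxx.
- apply/forallP => c; apply/implyP => /eqP Hc.
  have -> : c = inord (T.1 + j).
    by apply/val_inj; rewrite /= inordK //; exact: Hc.
  by move: (H j).
Qed.

Lemma cov_at N v (A : 'M['I_v]_(N,4)) r (T : cinter 4 3 v) (c : 'I_4) (j : 'I_3) :
  covers A r T -> val c = T.1 + j -> A r c = T.2 j.
Proof. by move/forallP/(_ j)/forallP/(_ c)/implyP => H Hc; apply/eqP/H/eqP. Qed.

Ltac wit := first [ by exists true, (@Ordinal 3 0 isT) | by exists true, (@Ordinal 3 1 isT)
  | by exists true, (@Ordinal 3 2 isT) | by exists false, (@Ordinal 3 0 isT)
  | by exists false, (@Ordinal 3 1 isT) | by exists false, (@Ordinal 3 2 isT) ].

Lemma cover_col (i i' : 'I_2) (c : 'I_4) : i != i' ->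
  exists b (j : 'I_3), val c = (if b then val i else val i') + j.
Proof.
case: i i' c => [[|[|i]] Hi] [[|[|i']] Hi'] [[|[|[|[|c]]]] Hc] //= _.
all: try wit.
Qed.

Lemma agree N v (A : 'M['I_v]_(N,4)) r1 r2 (T T' : cinter 4 3 v) :
  covers A r1 T -> covers A r1 T' -> covers A r2 T -> covers A r2 T' -> T != T' ->
  forall c, A r1 c = A r2 c.
Proof.
move=> c1 c1' c2 c2' neq c.
have ni : T.1 != T'.1.
  apply: contra neq => /eqP e; apply/eqP.
  move: T T' e c1 c1' {c2 c2'} => [i x] [i' y] /= e; subst i' => H1 H2.
  congr pair; apply/ffunP => j.
  have hc : i + j < 4 by move: (ltn_ord i) (ltn_ord j); rewrite /=; lia.
  by rewrite -(cov_at (c := Ordinal hc) (j := j) H1) // (cov_at (c := Ordinal hc) (j := j) H2).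
have [b [j Hc]] := cover_col c ni.
case: b Hc => Hc.
- by rewrite (cov_at c1 Hc) (cov_at c2 Hc).
- by rewrite (cov_at c1' Hc) (cov_at c2' Hc).
Qed.

Lemma rowv_inj v d (hdv : d + 1 <= v) (p q : Pt v d) :
  (forall c, rowv p c = rowv q c) -> p = q.
Proof.
case: p => [[[s a0] a1] a2]; case: q => [[[s' b0] b1] b2] H.
have h0 := H (@Ordinal 4 0 isT); have h1 := H (@Ordinal 4 1 isT).
have h2 := H (@Ordinal 4 2 isT); have h3 := H (@Ordinal 4 3 isT).
rewrite /= in h0 h1 h2 h3; subst b0 b1 b2.
have : val s = val s'.
  move: h3 => /(congr1 val) /= /eqP; rewrite eqn_modDl => /eqP.
  rewrite !modn_small //.
  - exact: leq_trans (ltn_ord s') hdv.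
  - exact: leq_trans (ltn_ord s) hdv.
by move/val_inj ->.
Qed.

Lemma Mat_inj v d (hdv : d + 1 <= v) r1 r2 :
  (forall c, Mat v d r1 c = Mat v d r2 c) -> r1 = r2.
Proof.
move=> H; apply: (@gP_inj v d); apply: (rowv_inj hdv) => c.
by have := H c; rewrite !mxE.
Qed.

Lemma addm_subm v (a : 'I_v) s : s <= v -> addm (subm a s) s = a.
Proof.
move=> hs; apply/val_inj => /=.
rewrite modnDml subnK; last by apply: leq_trans hs (leq_addl _ _).
by rewrite modnDr modn_small.
Qed.

Definition o0 := @Ordinal 3 0 isT.
Definition o1 := @Ordinal 3 1 isT.
Definition o2 := @Ordinal 3 2 isT.

Definition pT v d (T : cinter 4 3 v) (s : 'I_(d+1)) : Pt v d :=
  let: (i, x) := T in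
  if val i == 0 then (s, x o0, x o1, x o2) else (s, subm (x o2) s, x o0, x o1).

Lemma pT_inj v d T : injective (@pT v d T).
Proof. by case: T => i x s1 s2; rewrite /pT; case: ifP => _ [] . Qed.

Lemma pT_cov v d (hdv : d + 1 <= v) T s : covers (Mat v d) (hP (pT T s)) T.
Proof.
apply/forallP => j; apply/forallP => c; apply/implyP => /eqP Hc.
rewrite mxE hPK.
case: T Hc => [[[|[|i]] Hi] x]; case: j => [[|[|[|j]]] Hj];
  case: c => [[|[|[|[|c]]]] Hc] //= E.
all: try (apply/eqP; congr (x _); apply/val_inj; done).
rewrite addm_subm; last by apply: leq_trans (ltnW (ltn_ord s)) _; apply: leq_trans hdv.
by apply/eqP; congr (x _); apply/val_inj.
Qed.

Unset Implicit Arguments.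
Theorem mainTheorem15 (v d : nat) (hv : 2 <= v) (hd : 0 < d) (hdv : d + 1 <= v) :
  exists A : 'M['I_v]_((d + 1) * v ^ 3, 4), is_optimum_CDA d 3 A.
Proof.
exists (Mat v d); split; last by [].
split; first by [].
split.
  move=> T; apply/set0Pn; exists (hP (@pT v d T (Ordinal (ltn_addl d (ltn0Sn 0) : 0 < d + 1)))).

  by rewrite inE pT_cov.
move=> S T HS; split; last first.
  by move=> TS; rewrite /rhoS; exact: bigcup_sup.
move=> sub; case TS: (T \in S) => //; exfalso.
pose F s := hP (@pT v d T s).
have FT : forall s, F s \in rho (Mat v d) T by move=> s; rewrite inE pT_cov.
have ex : forall s, exists2 T', T' \in S & F s \in rho (Mat v d) T'.
  move=> s; move/subsetP: sub => /(_ _ (FT s)) /bigcupP [T' h1 h2].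
  by exists T'.
pose G s := odflt T [pick T' in S | F s \in rho (Mat v d) T'].
have GS : forall s, G s \in S /\ F s \in rho (Mat v d) (G s).
  move=> s; rewrite /G; case: pickP => [T' /andP[] //|] /= H0.
  have [T' h1 h2] := ex s; have := H0 T'; by rewrite h1 h2.
have Ginj : injective G.
  move=> s1 s2 e.
  have [S1 R1] := GS s1; have [S2 R2] := GS s2.
  have neq : T != G s1 by apply: contraFneq TS => ->.
  rewrite -e !inE in R1 R2.
  have := FT s1; have := FT s2; rewrite !inE => Q2 Q1.
  apply: (@pT_inj v d T); apply: (can_inj (@hPK v d)).
  apply: (Mat_inj hdv); exact: (agree Q1 R1 Q2 R2 neq).
have : #|[set G s | s in 'I_(d+1)]| <= #|S|.
  apply: subset_leq_card; apply/subsetP => _ /imsetP [s _ ->]; exact: (GS s).1.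
by rewrite card_imset // card_ord HS addn1 ltnn.
Qed.
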